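(* Let $k\ge2$ and let $g_1,g_2$ be densities on $(0,1)$ of the form $g_i(x)=\sum_{j=0}^{k-1}\beta_{i,j}\psi_{j+1}(x,1)+\beta_{i,k}\int_{(0,1)}\psi_k(x,\theta)\,dQ_i(\theta)$, $i=1,2$, with $(\beta_{i,0},\ldots,\beta_{i,k})\in\Delta_{k+1}$ and $Q_i$ probability measures on $(0,1)$. Set $\alpha_i=\beta_{i,0}$. Then $$|\alpha_1-\alpha_2|\le\sqrt{6\,\|g_1-g_2\|_1}.$$
   Context: $\psi_k(x,\theta)=\frac{k}{\theta}(1-\frac{x}{\theta})_+^{k-1}$ for $x,\theta>0$; in particular $\psi_1(\cdot,1)\equiv1$ on $(0,1)$. $\Delta_J=\{(w_1,\ldots,w_J)\in[0,1]^J:\sum_iw_i=1\}$. $\|\cdot\|_1$ is the $\mathbb{L}_1(0,1)$ norm. *)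

(* Defs.v *)
From HB Require Import structures.
From mathcomp Require Import all_boot all_order all_algebra.
From mathcomp Require Import all_classical all_reals all_analysis.
Set Implicit Arguments. Unset Strict Implicit. Unset Printing Implicit Defensive.
Import Order.TTheory GRing.Theory Num.Theory.
Local Open Scope classical_set_scope.
Local Open Scope ring_scope.

Definition psi (R : realType) (k : nat) (x theta : R) : R :=
  k%:R / theta * (Num.max 0 (1 - x / theta)) ^+ k.-1.

Definition simplex (R : realType) (k : nat) (beta : 'I_k.+1 -> R) : Prop :=
  (forall j, 0 <= beta j) /\ \sum_(j < k.+1) beta j = 1.

(* The integral is finite for x in (0,1) (psi_k(x,.) vanishes on (0,x] and is
   bounded by k/x on (x,1)), so we take its real value with fine. *)
Definition gmix (R : realType) (k : nat) (beta : 'I_k.+1 -> R)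
  (Q : probability R R) (x : R) : R :=
  \sum_(j < k) beta (widen_ord (leqnSn k) j) * psi j.+1 x 1
  + beta ord_max * fine (\int[Q]_(t in `]0%R, 1%R[) (psi k x t)%:E)%E.

Definition L1norm01 (R : realType) (f : R -> R) : \bar R :=
  (\int[lebesgue_measure]_(x in `]0%R, 1%R[) (`|f x|)%:E)%E.

(* Main.v *)
Require Import Defs.
From HB Require Import structures.
From mathcomp Require Import all_boot all_order all_algebra.
From mathcomp Require Import all_classical all_reals all_analysis.
From mathcomp Require Import ring lra zify measurable_realfun.
Import Order.TTheory GRing.Theory Num.Theory.
Import numFieldNormedType.Exports.
Local Open Scope classical_set_scope.
Local Open Scope ring_scope.

Section monoint.
Context d (T : measurableType d) (R : realType).
Variable mu : {measure set T -> \bar R}.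

Lemma my_le_integral (D : set T) (f1 f2 : T -> \bar R) :
  (forall x, D x -> (0 <= f1 x)%E) -> (forall x, D x -> (f1 x <= f2 x)%E) ->
  (\int[mu]_(x in D) f1 x <= \int[mu]_(x in D) f2 x)%E.
Proof.
move=> f10 f12.
have f20 : forall x, D x -> (0 <= f2 x)%E.
  by move=> x Dx; apply: le_trans (f10 _ Dx) (f12 _ Dx).
rewrite (ge0_integralE mu f10) (ge0_integralE mu f20).
apply: le_ereal_sup => _ /= [h hf <-]; exists h => //= x.
apply: (le_trans (hf x)); rewrite /patch; case: ifP => // /set_mem Dx.
exact: f12.
Qed.
End monoint.

Section psibound.
Variable R : realType.

Lemma pow_bound (u : R) n : 0 <= u -> u <= 1 ->
  n.+1%:R * u ^+ n * (1 - u) <= 1 - u ^+ n.+1.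
Proof.
move=> u0 u1; elim: n => [|n IH]; first by rewrite expr0 expr1 !mul1r.
have hu : 0 <= u ^+ n.+1 by exact: exprn_ge0.
have hu1 : u ^+ n.+1 <= 1 by exact: exprn_ile1.
have e : n.+2%:R * u ^+ n.+1 * (1 - u) =
   u * (n.+1%:R * u ^+ n * (1 - u)) + u ^+ n.+1 * (1 - u).
  by rewrite -(natr1 n.+1) exprS; ring.
have e2 : u ^+ n.+2 = u * u ^+ n.+1 by rewrite exprS.
rewrite e2 in hu hu1 *.
rewrite e; nra.
Qed.

Lemma psi_le (k : nat) (x t : R) : (2 <= k)%N -> 0 < x -> x < 1 -> 0 < t -> t <= 1 ->
  psi k x t <= 2 * (x^-1 - 1).
Proof.
move=> hk x0 x1 t0 t1.
have b0 : 0 <= 2 * (x^-1 - 1).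
  by rewrite mulr_ge0 // subr_ge0 invf_ge1 // ltW.
rewrite /psi.
have [xt|tx] := ltP x t; last first.
  have -> : Num.max 0 (1 - x / t) = 0.
    apply/max_idPl; rewrite subr_le0 ler_pdivlMr // mul1r //.
  case: k hk => [|[|k]] //= _; by rewrite expr0n /= mulr0.
set u := 1 - x / t.
have xt' : x / t < 1 by rewrite ltr_pdivrMr // mul1r.
have u0 : 0 < u by rewrite subr_gt0.
have u1 : u <= 1 by rewrite lerBlDr lerDl divr_ge0 // ltW.
rewrite (max_idPr (ltW u0)).
case: k hk => [|[|m]] //= _.
have hb := @pow_bound u m (ltW u0) u1.
have hm : m.+1%:R * u ^+ m * (1 - u) <= 1.
  apply: le_trans hb _; have := exprn_ge0 m.+1 (ltW u0); lra.
have hum : 0 <= u ^+ m by exact: exprn_ge0 (ltW u0).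
have e1 : 1 - u = x / t by rewrite /u; ring.
rewrite e1 in hm.
have key : m.+2%:R * u ^+ m * (x / t) <= 2.
  have : m.+2%:R <= 2 * m.+1%:R :> R by rewrite -[2]/(2%:R) -natrM ler_nat; lia.
  have : 0 <= u ^+ m * (x / t) by rewrite mulr_ge0 // divr_ge0 // ltW.
  nra.
have eu : u = (t - x) / t by rewrite /u; field; rewrite gt_eqF.
rewrite exprS.
have ex : x^-1 - 1 >= x^-1 - t^-1.
  have h1 : 1 <= t^-1 by rewrite invf_ge1.
  lra.
have L : m.+2%:R / t * (u * u ^+ m) = (m.+2%:R * u ^+ m * (x / t)) * u / x.
  by field; rewrite !gt_eqF.
rewrite L.
apply: (@le_trans _ _ (2 * u / x)).
  apply: ler_wpM2r; first by rewrite invr_ge0 ltW.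
  by apply: ler_wpM2r => //; exact: ltW.
have -> : 2 * u / x = 2 * (x^-1 - t^-1) by rewrite eu; field; rewrite !gt_eqF.
by apply: ler_wpM2l.
Qed.
End psibound.

Section gmixbounds.
Variable R : realType.
Local Notation I := (`]0%R, 1%R[%classic : set R).

Lemma psi_ge0 k (x t : R) : 0 <= t -> 0 <= psi k x t.
Proof.
move=> t0; rewrite /psi; apply: mulr_ge0; first exact: divr_ge0.
by apply: exprn_ge0; rewrite le_max lexx.
Qed.

Lemma psi1 (x : R) : psi 1 x 1 = 1.
Proof. by rewrite /psi expr0 divr1 mulr1. Qed.

Lemma psi_le_nat j (x : R) : 0 <= x -> psi j x 1 <= j%:R.
Proof.
move=> x0; rewrite /psi divr1.
rewrite -[leRHS]mulr1; apply: ler_wpM2l => //.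
apply: exprn_ile1; first by rewrite le_max lexx.
rewrite /Num.max; case: ifP => _ //; lra.
Qed.

Lemma fine_le (e : \bar R) (r : R) : (0 <= e)%E -> (e <= r%:E)%E -> fine e <= r.
Proof. by case: e => //= s _; rewrite lee_fin. Qed.

Lemma mixint_bound k (Q : probability R R) (x : R) : (2 <= k)%N ->
  Q I = 1%E -> 0 < x -> x < 1 ->
  0 <= fine (\int[Q]_(t in I) (psi k x t)%:E)%E <= 2 * (x^-1 - 1).
Proof.
move=> hk QI x0 x1.
have i0 : (0 <= \int[Q]_(t in I) (psi k x t)%:E)%E.
  apply: integral_ge0 => t /= It; rewrite lee_fin psi_ge0 //.
  by move: It; rewrite /= in_itv /= => /andP[/ltW].
apply/andP; split; first exact: fine_ge0.
apply: fine_le => //.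
apply: (@le_trans _ _ (\int[Q]_(t in I) (cst (2 * (x^-1 - 1))%:E) t)%E).
  apply: my_le_integral => t It; rewrite lee_fin.
    by rewrite psi_ge0 //; move: It; rewrite /= in_itv /= => /andP[/ltW].
  move: It; rewrite /= in_itv /= => /andP[t0 t1].
  by apply: psi_le => //; exact: ltW.
by rewrite integral_cst //= QI mule1.
Qed.
End gmixbounds.

Section gmix2.
Variable R : realType.
Local Notation I := (`]0%R, 1%R[%classic : set R).
Variables (k : nat) (hk : (2 <= k)%N) (beta : 'I_k.+1 -> R) (Q : probability R R).
Hypothesis hb : simplex beta.
Hypothesis hQ : Q I = 1%E.

Let j0 : 'I_k := Ordinal (leq_trans (isT : (0 < 2)%N) hk).
Let wj0 : widen_ord (leqnSn k) j0 = ord0.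
Proof. exact: val_inj. Qed.

Let sumb : \sum_(j < k) beta (widen_ord (leqnSn k) j) + beta ord_max = 1.
Proof. by case: hb => _ <-; rewrite big_ord_recr. Qed.

Let b0 j : 0 <= beta j. Proof. by case: hb. Qed.

Lemma gmix_lb (x : R) : 0 < x -> x < 1 -> beta ord0 <= gmix beta Q x.
Proof.
move=> x0 x1; rewrite /gmix.
have [f0 _] := andP (@mixint_bound R k Q x hk hQ x0 x1).
rewrite (bigD1 j0) //= wj0 psi1 mulr1 -addrA lerDl.
apply: addr_ge0; last exact: mulr_ge0.
apply: sumr_ge0 => j _; apply: mulr_ge0 => //; exact: psi_ge0.
Qed.

Lemma gmix_ub (x : R) : 0 < x -> x < 1 ->
  gmix beta Q x <= beta ord0 + 2 * (x^-1 - 1).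
Proof.
move=> x0 x1; rewrite /gmix.
have [f0 f1] := andP (@mixint_bound R k Q x hk hQ x0 x1).
set B := 2 * (x^-1 - 1).
have B0 : 0 <= B by apply: le_trans f1.
rewrite (bigD1 j0) //= wj0 psi1 mulr1 -addrA lerD2l.
apply: (@le_trans _ _ (\sum_(j < k | j != j0) beta (widen_ord (leqnSn k) j) * B
   + beta ord_max * B)).
  apply: lerD; last exact: ler_wpM2l.
  apply: ler_sum => j jj0; apply: ler_wpM2l => //.
  apply: psi_le => //.
  have : val j != 0%N by apply: contra jj0 => /eqP h; apply/eqP/val_inj.
  by rewrite ltnS lt0n.
rewrite -big_distrl /= -mulrDl -[leRHS]mul1r; apply: ler_wpM2r => //.
rewrite -sumb lerD2r [X in _ <= X](bigD1 j0) //= lerDr; exact: b0.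
Qed.

Lemma gmix_ub2 (x : R) : 0 < x -> x < 1 ->
  gmix beta Q x <= k%:R + fine (\int[Q]_(t in I) (psi k x t)%:E)%E.
Proof.
move=> x0 x1; rewrite /gmix.
have [f0 f1] := andP (@mixint_bound R k Q x hk hQ x0 x1).
apply: lerD.
  apply: (@le_trans _ _ (\sum_(j < k) beta (widen_ord (leqnSn k) j) * k%:R)).
    apply: ler_sum => j _; apply: ler_wpM2l => //.
    apply: le_trans (@psi_le_nat R j.+1 x (ltW x0)) _; rewrite ler_nat; exact: ltn_ord.
  rewrite -big_distrl /= -[leRHS]mul1r; apply: ler_wpM2r => //.
  by rewrite -sumb lerDl.
rewrite -[leRHS]mul1r; apply: ler_wpM2r => //.
have : 0 <= \sum_(j < k) beta (widen_ord (leqnSn k) j) by apply: sumr_ge0 => j _; exact: b0.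
have := sumb; lra.
Qed.

Lemma gmix_ge0 (x : R) : 0 < x -> x < 1 -> 0 <= gmix beta Q x.
Proof. by move=> x0 x1; have := gmix_lb x x0 x1; have := b0 ord0; lra. Qed.
End gmix2.

Section meas.
Variable R : realType.
Local Notation I := (`]0%R, 1%R[%classic : set R).

Lemma measurable_inv : measurable_fun [set: R] (fun t : R => t^-1).
Proof.
have -> : [set: R] = `]-oo, 0[ `|` ([set 0] `|` `]0, +oo[).
  apply/seteqP; split => // t _ /=; rewrite !in_itv /= andbT.
  by case: (ltgtP t 0) => h; [left|right; right|right; left].
apply/measurable_funU => //; first exact: measurableU.
split.
  apply: measurable_realfun.open_continuous_measurable_fun; first exact: interval_open.
  move=> t; rewrite inE /= in_itv /= => t0; apply: inv_continuous.
  by rewrite lt_eqF.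
apply/measurable_funU => //; split; first exact: measurable_fun_set1.
apply: measurable_realfun.open_continuous_measurable_fun; first exact: interval_open.
move=> t; rewrite inE /= in_itv /= andbT => t0; apply: inv_continuous.
by rewrite gt_eqF.
Qed.

Definition phi k (z : R * R) : R := \1_I z.1 * \1_I z.2 * psi k z.1 z.2.

Lemma measurable_phi k : measurable_fun [set: R * R] (phi k).
Proof.
rewrite /phi /psi.
apply: measurable_funM.
  apply: measurable_funM.
    by apply: measurableT_comp => //; exact: measurable_indic.
  by apply: measurableT_comp => //; exact: measurable_indic.
apply: measurable_funM.
  apply: measurable_funM => //.
  exact: measurableT_comp measurable_inv measurable_snd.
apply: measurable_funX.
apply: measurable_maxr => //.
apply: measurable_funB => //.
apply: measurable_funM; first exact: measurable_fst.
exact: measurableT_comp measurable_inv measurable_snd.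
Qed.
End meas.

Section tonelli.
Variable R : realType.
Local Notation I := (`]0%R, 1%R[%classic : set R).
Local Notation leb := (@lebesgue_measure R).

Lemma psi_le_kt k (x t : R) : 0 <= x -> 0 < t -> psi k x t <= k%:R / t.
Proof.
move=> x0 t0; rewrite /psi -[leRHS]mulr1; apply: ler_wpM2l.
  by rewrite divr_ge0 // ltW.
apply: exprn_ile1; first by rewrite le_max lexx.
have : 0 <= x / t by rewrite divr_ge0 // ltW.
rewrite /Num.max; case: ifP => _ //; lra.
Qed.

Lemma psi_zero k (x t : R) : (2 <= k)%N -> 0 < t -> t <= x -> psi k x t = 0.
Proof.
move=> hk t0 tx; rewrite /psi.
have -> : Num.max 0 (1 - x / t) = 0.
  by apply/max_idPl; rewrite subr_le0 ler_pdivlMr // mul1r.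
by case: k hk => [|[|k]] //= _; rewrite expr0n /= mulr0.
Qed.

Lemma inner_bound k (t : R) : (2 <= k)%N ->
  (\int[leb]_x (@phi R k (x, t))%:E <= k%:R%:E)%E.
Proof.
move=> hk; rewrite /phi /=.
have [It|nIt] := boolP (t \in I); last first.
  rewrite (@eq_integral _ _ _ _ _ (cst 0%E)); first by rewrite integral0 lee_fin.
  by move=> x _; rewrite [\1_I t]indicE (negbTE nIt) mulr0 mul0r.
move: (It); rewrite inE /= in_itv /= => /andP[t0 t1].
have H : (\int[leb]_(x in (`]0%R, t[%classic : set R)) (cst ((k%:R / t)%R)%:E) x <= k%:R%:E)%E.
  rewrite integral_cst //= lebesgue_measure_itv /= lte_fin t0 sube0 -EFinM lee_fin.
  by rewrite mulfVK // gt_eqF.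
apply: le_trans H.
rewrite [X in (_ <= X)%E]integral_mkcond.
apply: my_le_integral => x _.
  rewrite lee_fin !indicE; apply: mulr_ge0; [apply: mulr_ge0; exact: ler0n | exact: psi_ge0 (ltW t0)].
rewrite /patch; case: ifPn => [|nx].
  rewrite inE /= in_itv /= => /andP[x0 xt].
  rewrite !indicE It mulr1 lee_fin; case: (x \in I); rewrite ?mul1r ?mul0r.
    exact: psi_le_kt (ltW x0) t0.
  by rewrite divr_ge0 // ltW.
have [x0|x0] := leP x 0.
  rewrite !indicE; have -> : (x \in I) = false.
    by apply/negbTE/negP => /set_mem /=; rewrite in_itv /= ltNge x0.
  by rewrite !mul0r.
rewrite (@psi_zero k x t hk t0) ?mulr0 //.
rewrite leNgt; apply: contra nx => xt; rewrite inE /= in_itv /= x0 xt //=.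
Qed.

Lemma tonelli_M k (Q : probability R R) : (2 <= k)%N ->
  measurable_fun [set: R] (fun x => \int[Q]_t (@phi R k (x, t))%:E)%E /\
  (\int[leb]_x (\int[Q]_t (@phi R k (x, t))%:E) <= k%:R%:E)%E.
Proof.
move=> hk.
have mf : measurable_fun [set: R * R] (fun z => (@phi R k z)%:E).
  by apply/measurable_EFinP; exact: measurable_phi.
have f0 : forall z, (0 <= (@phi R k z)%:E)%E.
  move=> [x t]; rewrite lee_fin /phi /= !indicE.
  case: (boolP (t \in I)) => tI; last by rewrite mulr0 mul0r.
  rewrite mulr1; apply: mulr_ge0 => //; apply: psi_ge0.
  by move: tI; rewrite inE /= in_itv /= => /andP[/ltW].
split.
  exact: (@measurable_fun_fubini_tonelli_F _ _ _ _ _ Q _ mf f0).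
rewrite (@fubini_tonelli _ _ _ _ _ leb Q _ mf f0) /=.
apply: (@le_trans _ _ (\int[Q]_t (cst (k%:R%:E)) t)%E).
  apply: my_le_integral => t _; last exact: inner_bound.
  by apply: integral_ge0 => x _; exact: f0.
by rewrite integral_cst //= probability_setT mule1.
Qed.

Lemma M_eq k (Q : probability R R) (x : R) : I x ->
  (\int[Q]_t (@phi R k (x, t))%:E = \int[Q]_(t in I) (psi k x t)%:E)%E.
Proof.
move=> Ix; rewrite [RHS]integral_mkcond; apply: eq_integral => t _.
rewrite /patch /phi /= !indicE (mem_set Ix) mul1r.
by case: ifP => _; rewrite ?mul1r ?mul0r.
Qed.

Lemma L1_fin (G : R -> R) (M1 M2 : R -> \bar R) (c a1 a2 : R) :
  measurable_fun [set: R] M1 -> measurable_fun [set: R] M2 ->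
  (forall x, (0 <= M1 x)%E) -> (forall x, (0 <= M2 x)%E) ->
  (\int[leb]_x M1 x <= a1%:E)%E -> (\int[leb]_x M2 x <= a2%:E)%E ->
  (forall x, I x -> ((`|G x|)%:E <= c%:E + M1 x + M2 x)%E) -> 0 <= c ->
  (\int[leb]_(x in I) (`|G x|)%:E <= (c + a1 + a2)%:E)%E.
Proof.
move=> m1 m2 p1 p2 i1 i2 hG c0.
have mI : measurable I by exact: measurable_itv.
apply: (@le_trans _ _ (\int[leb]_(x in I) (c%:E + M1 x + M2 x))%E).
  by apply: my_le_integral => x Ix; [rewrite lee_fin | exact: hG].
have mc : measurable_fun I (fun x : R => c%:E) by [].
have mM1 : measurable_fun I M1 by exact: measurable_funTS.
have mM2 : measurable_fun I M2 by exact: measurable_funTS.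
have hc0 : forall x, I x -> (0 <= c%:E)%E by move=> x _; rewrite lee_fin.
rewrite (@ge0_integralD _ _ _ leb I mI (fun x => c%:E + M1 x)%E M2); last 4 first.
- by move=> x _; apply: adde_ge0.
- exact: emeasurable_funD.
- by move=> x _.
- exact: mM2.
rewrite (@ge0_integralD _ _ _ leb I mI (fun x => c%:E)%E M1) //.
rewrite !EFinD; apply: leeD; first apply: leeD.
- by rewrite integral_cst //= lebesgue_measure_itv /= lte01 sube0 mule1.
- apply: le_trans i1; rewrite [leLHS]integral_mkcond.
  apply: my_le_integral => x _; rewrite /patch; case: ifP => _ //; exact: p1.
- apply: le_trans i2; rewrite [leLHS]integral_mkcond.
  apply: my_le_integral => x _; rewrite /patch; case: ifP => _ //; exact: p2.
Qed.
End tonelli.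

Section ftc.
Variable R : realType.
Local Notation leb := (@lebesgue_measure R).

Lemma tri_int (d : R) : 0 < d -> d <= 1 ->
  (\int[leb]_(x in (`[(1 - d / 3)%R, 1%R]%classic : set R)) ((3 * x + d - 3)%R)%:E = ((d ^+ 2 / 6)%R)%:E)%E.
Proof.
move=> d0 d1.
set q : {poly R} := 3%:P * 'X + (d - 3)%:P.
set p : {poly R} := (3 / 2)%:P * 'X ^+ 2 + (d - 3)%:P * 'X.
have ab : 1 - d / 3 < 1 by rewrite ltrBlDr ltrDl divr_gt0.
have -> : (\int[leb]_(x in (`[(1 - d / 3)%R, 1%R]%classic : set R)) ((3 * x + d - 3)%R)%:E =
    \int[leb]_(x in (`[(1 - d / 3)%R, 1%R]%classic : set R)) (horner q x)%:E)%E.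
  by apply: eq_integral => x _; rewrite /q !(hornerD, hornerM, hornerC, hornerX) addrA.
rewrite (@continuous_FTC2 R (horner q) (horner p)) //.
- congr (_%:E); rewrite /p !(hornerD, hornerM, hornerC, hornerX, hornerXn); field.
- by [].
- by apply: continuous_subspaceT => x; exact: continuous_horner.
- split.
  + by move=> x _; exact: derivable_horner.
  + by apply: cvg_at_right_filter; exact: continuous_horner.
  + by apply: cvg_at_left_filter; exact: continuous_horner.
- move=> x _; rewrite -derivE /p /q.
  rewrite !(derivD, derivM, derivC, derivX, derivXn) !(mul0r, mul1r, mulr1, add0r, hornerD, hornerM, hornerC, hornerX).
  field.
all: by [].
Qed.
End ftc.

Section lb.
Variable R : realType.
Local Notation I := (`]0%R, 1%R[%classic : set R).
Local Notation leb := (@lebesgue_measure R).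

Lemma L1_lb (G : R -> R) (d : R) : 0 < d -> d <= 1 ->
  (forall x, 1 - d / 3 <= x -> x < 1 -> 3 * x + d - 3 <= `|G x|) ->
  (((d ^+ 2 / 6)%R)%:E <= \int[leb]_(x in I) (`|G x|)%:E)%E.
Proof.
move=> d0 d1 hG.
rewrite -tri_int //.
rewrite -integral_itv_bndo_bndc; last first.
  apply/measurable_EFinP; apply: measurable_funB => //.
  apply: measurable_funD => //.
rewrite integral_mkcond [leRHS]integral_mkcond.
apply: my_le_integral => x _; rewrite /patch.
  case: ifPn => // /set_mem; rewrite /= in_itv /= => /andP[ax x1].
  rewrite lee_fin; lra.
case: ifPn => [/set_mem|_]; last first.
  by case: ifP => _ //; rewrite lee_fin.
rewrite /= in_itv /= => /andP[ax x1].
have x0 : 0 < x.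
  apply: lt_le_trans ax; have : d / 3 <= 1 / 3 by rewrite ler_pM2r.
  lra.
rewrite ifT; first by rewrite lee_fin; exact: hG.
by apply/mem_set; rewrite /= in_itv /= x0 x1.
Qed.
End lb.

Lemma phi_ge0 (R : realType) k (z : R * R) : 0 <= @phi R k z.
Proof.
case: z => x t; rewrite /phi /= !indicE.
case: (boolP (t \in (`]0%R, 1%R[%classic : set R))) => tI; last by rewrite mulr0 mul0r.
rewrite mulr1; apply: mulr_ge0 => //; apply: psi_ge0.
by move: tI; rewrite inE /= in_itv /= => /andP[/ltW].
Qed.

Lemma fine_le_self (R : realType) (e : \bar R) : (0 <= e)%E -> ((fine e)%:E <= e)%E.
Proof. by case: e. Qed.

Theorem mainTheorem9 (R : realType) (k : nat) (hk : (2 <= k)%N)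
  (beta1 beta2 : 'I_k.+1 -> R) (Q1 Q2 : probability R R)
  (hb1 : simplex beta1) (hb2 : simplex beta2)
  (hQ1 : Q1 `]0%R, 1%R[%classic = 1%E) (hQ2 : Q2 `]0%R, 1%R[%classic = 1%E) :
  `|beta1 ord0 - beta2 ord0| <=
    Num.sqrt (6 * fine (L1norm01 (fun x => gmix beta1 Q1 x - gmix beta2 Q2 x))).
Proof.
set G := fun x => gmix beta1 Q1 x - gmix beta2 Q2 x.
set L := L1norm01 G.
have L0 : (0 <= L)%E by apply: integral_ge0 => x _; rewrite lee_fin.
have [m1 i1] := @tonelli_M R k Q1 hk.
have [m2 i2] := @tonelli_M R k Q2 hk.
have Lfin : (L <= (2 * k%:R + k%:R + k%:R)%:E)%E.
  apply: (@L1_fin R G _ _ (2 * k%:R) k%:R k%:R m1 m2 _ _ i1 i2 _ _).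
  - by move=> x; apply: integral_ge0 => t _; rewrite lee_fin phi_ge0.
  - by move=> x; apply: integral_ge0 => t _; rewrite lee_fin phi_ge0.
  - move=> x Ix; move: (Ix); rewrite /= in_itv /= => /andP[x0 x1].
    rewrite !(@M_eq R k _ x Ix).
    have ga := @gmix_ge0 R k hk beta1 Q1 hb1 hQ1 x x0 x1.
    have gb := @gmix_ge0 R k hk beta2 Q2 hb2 hQ2 x x0 x1.
    have ua := @gmix_ub2 R k hk beta1 Q1 hb1 hQ1 x x0 x1.
    have ub := @gmix_ub2 R k hk beta2 Q2 hb2 hQ2 x x0 x1.
    have [f1 _] := andP (@mixint_bound R k Q1 x hk hQ1 x0 x1).
    have [f2 _] := andP (@mixint_bound R k Q2 x hk hQ2 x0 x1).
    set F1 := (\int[Q1]_(t in _) _)%E in ua f1 *.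
    set F2 := (\int[Q2]_(t in _) _)%E in ub f2 *.
    have F10 : (0 <= F1)%E by apply: integral_ge0 => t /= It; rewrite lee_fin psi_ge0 //; move: It; rewrite /= in_itv /= => /andP[/ltW].
    have F20 : (0 <= F2)%E by apply: integral_ge0 => t /= It; rewrite lee_fin psi_ge0 //; move: It; rewrite /= in_itv /= => /andP[/ltW].
    apply: (@le_trans _ _ ((2 * k%:R)%:E + (fine F1)%:E + (fine F2)%:E)%E).
      rewrite -!EFinD lee_fin /G ler_norml; apply/andP; split; lra.
    by apply: leeD; [apply: leeD => //|]; apply: fine_le_self.
  - by rewrite mulr_ge0.
have LE : L = (fine L)%:E.
  by move: L0 Lfin; case: L.
set d := `|beta1 ord0 - beta2 ord0|.
have [d0|d0] := eqVneq d 0; first by rewrite d0 sqrtr_ge0.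
have dpos : 0 < d by rewrite lt_neqAle eq_sym d0 normr_ge0.
have [hb10 hb11] := hb1; have [hb20 hb21] := hb2.
have ble1 (b : 'I_k.+1 -> R) : simplex b -> b ord0 <= 1.
  case=> bp <-; rewrite (bigD1 ord0) //= lerDl; apply: sumr_ge0 => i _; exact: bp.
have d1 : d <= 1.
  rewrite /d ler_norml; have := ble1 _ hb1; have := ble1 _ hb2.
  have := hb10 ord0; have := hb20 ord0; move=> *; apply/andP; split; lra.
have hG : forall x, 1 - d / 3 <= x -> x < 1 -> 3 * x + d - 3 <= `|G x|.
  move=> x ax x1.
  have x23 : 2 / 3 <= x.
    have : d / 3 <= 1 / 3 by rewrite ler_pM2r.
    lra.
  have x0 : 0 < x by apply: lt_le_trans x23; rewrite divr_gt0.
  have y32 : x^-1 <= 3 / 2.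
    rewrite -div1r ler_pdivrMr //; lra.
  have ey : x^-1 - 1 = (1 - x) * x^-1 by field; rewrite gt_eqF.
  have key : 2 * (x^-1 - 1) <= 3 * (1 - x).
    rewrite ey; have : 0 <= 1 - x by lra.
    nra.
  have la := @gmix_lb R k hk beta1 Q1 hb1 hQ1 x x0 x1.
  have lb := @gmix_lb R k hk beta2 Q2 hb2 hQ2 x x0 x1.
  have ua := @gmix_ub R k hk beta1 Q1 hb1 hQ1 x x0 x1.
  have ub := @gmix_ub R k hk beta2 Q2 hb2 hQ2 x x0 x1.
  rewrite /G ler_normr; move: ax; rewrite /d.
  case: (lerP 0 (beta1 ord0 - beta2 ord0)) => h.
    rewrite (ger0_norm h) => ax; apply/orP; left; lra.
  rewrite (ltr0_norm h) => ax; apply/orP; right; lra.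
have lb := @L1_lb R G d dpos d1 hG.
have : d ^+ 2 / 6 <= fine L.
  by rewrite -lee_fin -LE.
move=> hL.
rewrite -[d]ger0_norm ?normr_ge0 // -sqrtr_sqr ler_sqrt; last first.
  by rewrite mulr_ge0 // fine_ge0.
lra.
Qed.
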